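(* (1) Let $I=(\mathcal{M},[N],(u_i)_{i\in[N]})$ be a non-negative instance. Then $\frac23\le\lambda^I\le\infty$, and $\lambda^I=\infty$ if and only if $MmS_{u_i}^N(\mathcal{M})=0$ for all $i\in[N]$. (2) Let $I=(\mathcal{M},[N],(d_i)_{i\in[N]})$ be a non-positive instance. Then $0\le\lambda^I\le2$, and $\lambda^I=0$ if $MmS_{d_i}^N(\mathcal{M})=0$ for some $i\in[N]$.
   Context: An instance: finite item set $\mathcal{M}$, agents $[N]=\{1,\dots,N\}$, additive utilities $v_i$, either all item values $\ge0$ (non-negative instance, goods) or all $\le0$ (non-positive instance, chores). $\Pi_N(\mathcal{M})$ is the set of ordered $N$-partitions of $\mathcal{M}$ (parts may be empty); $MmS_{v}^N(\mathcal{M}):=\max_{(S_1,\ldots,S_N)\in\Pi_N(\mathcal{M})}\min_{j} v(S_j)$. For $\lambda\in\mathbb{R}$, an allocation $S\in\Pi_N(\mathcal{M})$ solves the $\lambda$-max-min problem for the instance iff $v_i(S_i)\ge\lambda\cdot MmS_{v_i}^N(\mathcal{M})$ for all $i$. The optimal MmS ratio $\lambda^I$ is: for a non-negative instance, the maximal $\lambda\in[0,\infty]$ for which the $\lambda$-max-min problem has a solution (with $\lambda^I=\infty$ meaning a solution exists for every real $\lambda$); for a non-positive instance, the minimal $\lambda\in[0,\infty)$ for which the $\lambda$-max-min problem has a solution. *)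

(* Defs.v *)
From HB Require Import structures.
From mathcomp Require Import all_boot all_order all_algebra.
Set Implicit Arguments. Unset Strict Implicit. Unset Printing Implicit Defensive.
Import Order.TTheory GRing.Theory Num.Theory.
Local Open Scope ring_scope.

(* Items: a finite type M.  Agents: 'I_N.  An ordered N-partition
   (S_1,...,S_N) of M (parts may be empty) is encoded by the assignment
   f : {ffun M -> 'I_N}, with S_j = [set x | f x == j]. *)

Definition bundle_val (R : realFieldType) (M : finType) (N : nat)
  (v : M -> R) (f : {ffun M -> 'I_N}) (j : 'I_N) : R :=
  \sum_(x : M | f x == j) v x.

Definition vbound (R : realFieldType) (M : finType) (v : M -> R) : R :=
  \sum_(x : M) `|v x|.

(* min_j v(S_j)   (well defined for N > 0, vbound is an upper bound) *)
Definition min_bundle (R : realFieldType) (M : finType) (N : nat)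
  (v : M -> R) (f : {ffun M -> 'I_N}) : R :=
  \big[Num.min/vbound v]_(j : 'I_N) bundle_val v f j.

(* MmS_v^N(M) = max over ordered N-partitions of min_j v(S_j)
   (-vbound is a lower bound for every min_bundle when N > 0) *)
Definition MmS (R : realFieldType) (M : finType) (N : nat) (v : M -> R) : R :=
  \big[Num.max/ - vbound v]_(f : {ffun M -> 'I_N}) min_bundle v f.

Definition solves (R : realFieldType) (M : finType) (N : nat)
  (u : 'I_N -> M -> R) (lam : R) (f : {ffun M -> 'I_N}) : Prop :=
  forall i : 'I_N, lam * MmS N (u i) <= bundle_val (u i) f i.

Definition solvable (R : realFieldType) (M : finType) (N : nat)
  (u : 'I_N -> M -> R) (lam : R) : Prop :=
  exists f : {ffun M -> 'I_N}, solves u lam f.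

Definition nonneg_instance (R : realFieldType) (M : finType) (N : nat)
  (u : 'I_N -> M -> R) : Prop := forall i x, 0 <= u i x.

Definition nonpos_instance (R : realFieldType) (M : finType) (N : nat)
  (u : 'I_N -> M -> R) : Prop := forall i x, u i x <= 0.

(* lambda^I for a non-negative instance, as a value in [0, oo]:
   None = oo (solvable for every real lambda);
   Some l = l is the maximum of the lambdas in [0,oo) with a solution. *)
Definition opt_ratio_nonneg (R : realFieldType) (M : finType) (N : nat)
  (u : 'I_N -> M -> R) (l : option R) : Prop :=
  match l with
  | None => forall lam : R, solvable u lam
  | Some l => [/\ 0 <= l, solvable u l &
               forall lam : R, 0 <= lam -> solvable u lam -> lam <= l]
  end.

Definition opt_ratio_nonpos (R : realFieldType) (M : finType) (N : nat)
  (u : 'I_N -> M -> R) (l : R) : Prop :=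
  [/\ 0 <= l, solvable u l &
      forall lam : R, 0 <= lam -> solvable u lam -> l <= lam].

(* Main.v *)
Require Import Defs.
From HB Require Import structures.
From mathcomp Require Import all_boot all_order all_algebra.
From mathcomp Require Import zify ring lra.
Set Implicit Arguments. Unset Strict Implicit. Unset Printing Implicit Defensive.
Import Order.TTheory GRing.Theory Num.Theory.
Local Open Scope ring_scope.

Section Helpers.
Variable R : realFieldType.

Lemma sum_sub_le (T : Type) (s : seq T) (P Q : pred T) (F : T -> R) :
  (forall x, Q x -> P x) -> (forall x, P x -> 0 <= F x) ->
  \sum_(x <- s | Q x) F x <= \sum_(x <- s | P x) F x.
Proof.
move=> hQP hF; rewrite [X in X <= _]big_mkcond [X in _ <= X]big_mkcond /=.
apply: ler_sum => x _; case hq: (Q x); first by rewrite (hQP _ hq).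
by case hp: (P x) => //; apply: hF.
Qed.

Lemma sum_memX (T : eqType) (s X : seq T) (F : T -> R) :
  uniq s -> uniq X -> {subset X <= s} ->
  \sum_(x <- s | x \in X) F x = \sum_(x <- X) F x.
Proof.
move=> us uX sub; rewrite -big_filter; apply: perm_big.
apply: uniq_perm; first by rewrite filter_uniq.
  by [].
by move=> x; rewrite mem_filter; apply/andP/idP => [[]//|h]; split=> //; apply: sub.
Qed.

Lemma sum_split_mem (T : eqType) (s X : seq T) (F : T -> R) :
  uniq s -> uniq X -> {subset X <= s} ->
  \sum_(x <- s) F x = \sum_(x <- X) F x + \sum_(x <- s | x \notin X) F x.
Proof.
move=> us uX sub; rewrite (bigID (fun x => x \in X)) /= sum_memX //.
Qed.

Lemma sum_le_const (T : eqType) (s : seq T) (F : T -> R) c :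
  (forall x, x \in s -> F x <= c) -> \sum_(x <- s) F x <= (size s)%:R * c.
Proof.
elim: s => [|y s IH] h; first by rewrite big_nil mul0r.
rewrite big_cons /= -add1n natrD mulrDl mul1r; apply: lerD.
  by apply: h; rewrite inE eqxx.
by apply: IH => x hx; apply: h; rewrite inE hx orbT.
Qed.

End Helpers.

Section Part.
Variable R : realFieldType.

Definition haspart (v : nat -> R) (s : seq nat) (n : nat) (mu : R) :=
  exists f : nat -> nat, forall j, (j < n)%N -> mu <= \sum_(x <- s | f x == j) v x.

Lemma relab_eq (a j0 j k : nat) : (j < k)%N ->
  ((if (a < j0)%N then a else if a == j0 then k else a.-1) == j) =
  (a == if (j < j0)%N then j else j.+1).
Proof.
move=> hj.
case: (ltnP a j0) => h1; case: (ltnP j j0) => h2; apply/eqP/eqP; try lia.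
  case: eqP => h3; lia.
  case: eqP => h3; lia.
  move=> ->; rewrite (_ : (j.+1 == j0) = false) //; apply/eqP; lia.
Qed.

Lemma drop_bundle (v : nat -> R) (s : seq nat) (mu : R) (f : nat -> nat) (j0 k : nat) (p : pred nat) :
  (j0 < k.+1)%N ->
  (forall j, (j < k.+1)%N -> j != j0 -> mu <= \sum_(x <- s | f x == j) v x) ->
  (forall x, x \in s -> ~~ p x -> f x = j0) ->
  haspart v [seq x <- s | p x] k mu.
Proof.
move=> hj0 hb hp.
exists (fun x => if (f x < j0)%N then f x else if f x == j0 then k else (f x).-1).
move=> j hj; rewrite big_filter_cond.
have -> : \sum_(x <- s | p x && ((if (f x < j0)%N then f x else if f x == j0 then k else (f x).-1) == j)) v x
   = \sum_(x <- s | f x == if (j < j0)%N then j else j.+1) v x.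
  rewrite big_seq_cond [RHS]big_seq_cond; apply: eq_bigl => x.
  case hx: (x \in s) => //=; rewrite relab_eq //.
  case hpx: (p x) => //=; rewrite (hp x hx) ?hpx //.
  by case: (ltnP j j0) => h; apply/eqP; lia.
apply: hb; first by case: (ltnP j j0) => h; lia.
by case: (ltnP j j0) => h; apply/eqP; lia.
Qed.

Lemma norm_part (v : nat -> R) s n mu : (forall x, 0 <= v x) -> haspart v s n mu ->
  exists f : nat -> nat, (forall x, (f x < n)%N \/ n = 0%N) /\
     forall j, (j < n)%N -> mu <= \sum_(x <- s | f x == j) v x.
Proof.
move=> hv [f hf]; exists (fun x => if (f x < n)%N then f x else 0%N); split.
  move=> x; case: (ltnP (f x) n) => h; first by left.
  by case: (n) h => [|n'] h; [right|left].
move=> j hj; apply: (le_trans (hf j hj)); apply: sum_sub_le => // x /eqP ->.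
by rewrite hj.
Qed.

End Part.

Section Swap.
Variable R : realFieldType.

Definition tau (x y z : nat) := if z == x then y else if z == y then x else z.

Lemma tauK x y : involutive (tau x y).
Proof.
move=> z; rewrite /tau.
case: (eqVneq z x) => [->|hzx].
  case: (eqVneq y x) => [->|hyx] //.  by rewrite eqxx.

case: (eqVneq z y) => [->|hzy].
  by rewrite eqxx.
by rewrite (negbTE hzx) (negbTE hzy).
Qed.

Lemma swap_le (v : nat -> R) s (f : nat -> nat) x y j0 j :
  uniq s -> x \in s -> y \in s -> f y = j0 -> v x <= v y -> j != j0 ->
  \sum_(z <- s | f z == j) v z <= \sum_(z <- s | f (tau x y z) == j) v z.
Proof.
move=> us xs ys hy hv hj.
have hp : perm_eq s (map (tau x y) s).
  apply: uniq_perm => //; first by rewrite (map_inj_uniq (can_inj (tauK x y))).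
  move=> z; rewrite -[in RHS](tauK x y z) (mem_map (can_inj (tauK x y))).
  rewrite /tau; case: (eqVneq z x) => [->|_]; first by rewrite xs ys.
  by case: (eqVneq z y) => [->|_]; rewrite ?xs ?ys.
rewrite [X in _ <= X](perm_big _ hp) big_map.
under [X in _ <= X]eq_bigl do rewrite tauK.
apply: ler_sum => z /eqP hz; rewrite /tau.
case: (eqVneq z x) => [->//|_]; case: (eqVneq z y) => [hzy|_//].
by move: hj; rewrite -hz hzy hy eqxx.
Qed.

Lemma pigeon (f : nat -> nat) (s : seq nat) k : (forall x, f x < k.+1)%N -> (k.+1 < size s)%N ->
  exists p q, [/\ (p < q)%N, (q <= k.+1)%N & f (nth 0 s p) = f (nth 0 s q)].
Proof.
move=> hf hs.
set l := map f (take k.+2 s).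
have hsz : size l = k.+2 by rewrite size_map size_takel.
have : ~~ uniq l.
  apply/negP => ul.
  have hsub : {subset l <= iota 0 k.+1} by move=> z /mapP [w _ ->]; rewrite mem_iota add0n hf.
  by have := uniq_leq_size ul hsub; rewrite size_iota hsz ltnn.
case/(uniqPn 0) => i [j [hij hj]]; rewrite hsz in hj.
rewrite !(nth_map 0) ?size_takel //; try lia.
rewrite !nth_take //; try lia.
by move=> e; exists i, j; split=> //; lia.
Qed.

End Swap.

Section BagFill.
Variable R : realFieldType.
Variable A : eqType.
Variable a0 : A.
Variable v : A -> nat -> R.
Variable mu : A -> R.
Hypothesis hv : forall i x, 0 <= v i x.

Lemma BF n : forall (P : seq A) (s Bg : seq nat), size P = n -> uniq P -> uniq s -> uniq Bg ->
  {subset Bg <= s} -> (size Bg <= n)%N ->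
  (forall i, i \in P -> 0 <= mu i) ->
  (forall i, i \in P -> n%:R * mu i <= \sum_(x <- s) v i x) ->
  (forall i x, i \in P -> x \in s -> 3 * v i x <= 2 * mu i) ->
  (forall i x, i \in P -> x \in s -> x \notin Bg -> 3 * v i x <= mu i) ->
  exists g : nat -> A, forall i, i \in P -> 2 * mu i <= 3 * \sum_(x <- s | g x == i) v i x.
Proof.
elim: n => [|k IH] P s Bg hsz uP us uB sB szB hmu htot hbig hsmall.
  by case: P hsz uP hmu htot hbig hsmall => // _ *; exists (fun _ => a0).
set hb := (if Bg is b :: _ then [:: b] else [::]).
set Bg' := behead Bg.
set L := [seq x <- s | x \notin Bg].
set bag := fun t => hb ++ take t L.
have hbB : {subset hb <= Bg} by rewrite /hb; case: (Bg) => [|b l] //= x; rewrite inE => /eqP ->; rewrite inE eqxx.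
have uB' : uniq Bg' by rewrite /Bg'; case: (Bg) uB => //= b l /andP [].
have hB'B : {subset Bg' <= Bg} by rewrite /Bg'; case: (Bg) => //= b l x hx; rewrite inE hx orbT.
have hbag_uniq : forall t, uniq (bag t).
  move=> t; rewrite cat_uniq; apply/and3P; split.
  - by rewrite /hb; case: (Bg).
  - apply/hasPn => x /mem_take; rewrite mem_filter => /andP [hx _]; apply/negP => /hbB.
    by rewrite (negbTE hx).
  - by apply: take_uniq; rewrite filter_uniq.
have hbag_sub : forall t, {subset bag t <= s}.
  move=> t x; rewrite mem_cat => /orP [/hbB/sB //|/mem_take]; by rewrite mem_filter => /andP [].
have hbag_disj : forall t x, x \in bag t -> x \notin Bg'.
  move=> t x; rewrite mem_cat => /orP [|/mem_take].
    rewrite /hb /Bg'; case: (Bg) uB => //= b l /andP [hb0 _]; by rewrite inE => /eqP ->.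
  by rewrite mem_filter => /andP [hx _]; apply/negP => /hB'B; rewrite (negbTE hx).
have hsplit : forall i, \sum_(x <- s) v i x = \sum_(x <- Bg) v i x + \sum_(x <- L) v i x.
  by move=> i; rewrite (sum_split_mem _ us uB sB) big_filter.
set claim := fun t => has (fun i => 2 * mu i <= 3 * \sum_(x <- bag t) v i x) P.
have hclaim : claim (size L).
  have [i1 hi1] : exists i1, i1 \in P by case: (P) hsz => // i l _; exists i; rewrite mem_head.
  apply/hasP; exists i1 => //.
  have h1 := htot i1 hi1; have h0 := hmu i1 hi1.
  rewrite /bag take_size big_cat /=.
  have hk : 0 <= k%:R * mu i1 by apply: mulr_ge0.
  move: h1; rewrite hsplit -addn1 natrD mulrDl mul1r.
  rewrite /hb; move: szB hsmall hbig sB; case: (Bg) => [|b l] /= szB hsmall hbig sB.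
    by rewrite big_nil; lra.
  rewrite big_cons big_cons big_nil.
  have h2 : 3 * \sum_(x <- l) v i1 x <= 2 * (k%:R * mu i1).
    have := @sum_le_const R _ l (v i1) (2 / 3 * mu i1).
    have hl : forall x, x \in l -> v i1 x <= 2 / 3 * mu i1.
      move=> x hx; have hxs : x \in b :: l by rewrite inE hx orbT.
      have := hbig i1 x hi1 (sB x hxs); lra.
    move=> /(_ hl) h; have : (size l)%:R * (2/3 * mu i1) <= k%:R * (2/3 * mu i1).
      by apply: ler_wpM2r; [lra| rewrite ler_nat].
    lra.
  lra.
case: (ex_minnP (ex_intro claim (size L) hclaim)) => t0 ht0 hmin.
have ht0L : (t0 <= size L)%N := hmin _ hclaim.
case/hasP: (ht0) => c cP hc.
have hbagle : forall i, i \in P -> \sum_(x <- bag t0) v i x <= mu i.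
  move=> i iP; have h0 := hmu i iP.
  case: t0 ht0 hmin ht0L {hc} => [|t] ht0 hmin ht0L.
    rewrite /bag take0 cats0 /hb; move: hbig hB'B sB; case: (Bg) => [|b l] hbig _ sB.
      by rewrite big_nil.
    rewrite big_cons big_nil addr0.
    have := hbig i b iP (sB b (mem_head _ _)); lra.
  have hnt : ~~ claim t.
    by apply/negP => /hmin; rewrite ltnn.
  have hlt : (t < size L)%N by [].
  rewrite /bag (take_nth 0 hlt) -cats1 catA big_cat big_cons big_nil /= addr0.
  have hn : nth 0 L t \in L by apply: mem_nth.
  move: (hn); rewrite mem_filter => /andP [hn1 hn2].
  have := hsmall i _ iP hn2 hn1.
  move/hasPn: hnt => /(_ i iP); rewrite -ltNge /bag => h.
  lra.
set B := bag t0.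
set s' := [seq x <- s | x \notin B].
have hsplit2 : forall i, \sum_(x <- s) v i x = \sum_(x <- B) v i x + \sum_(x <- s') v i x.
  by move=> i; rewrite (sum_split_mem _ us (hbag_uniq t0) (hbag_sub t0)) big_filter.
have [g' hg'] : exists g' : nat -> A, forall i, i \in rem c P ->
    2 * mu i <= 3 * \sum_(x <- s' | g' x == i) v i x.
  apply: (IH (rem c P) s' Bg').
  - by rewrite size_rem // hsz.
  - by rewrite rem_uniq.
  - by rewrite filter_uniq.
  - by [].
  - move=> x hx; rewrite mem_filter; apply/andP; split; last by apply: sB; apply: hB'B.
    by apply/negP => /hbag_disj; rewrite hx.
  - by rewrite /Bg'; case: (Bg) szB => //= b l; rewrite ltnS.
  - by move=> i; rewrite (mem_rem_uniq _ uP) => /andP [_ /hmu].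
  - move=> i; rewrite (mem_rem_uniq _ uP) => /andP [_ iP].
    have := htot i iP; have := hbagle i iP; rewrite hsplit2 -addn1 natrD mulrDl mul1r.
    lra.
  - move=> i x; rewrite (mem_rem_uniq _ uP) mem_filter => /andP [_ iP] /andP [_ xs].
    exact: hbig.
  - move=> i x; rewrite (mem_rem_uniq _ uP) mem_filter => /andP [_ iP] /andP [xB xs] xB'.
    apply: hsmall => //; apply/negP => xBg; move: xB' xB.
    rewrite /Bg' /B /bag /hb; move: xBg; case: (Bg) => [|b l] //.
    rewrite inE => /orP [/eqP ->|->] //; by rewrite mem_cat mem_head.
exists (fun x => if x \in B then c else g' x) => i iP.
case: (eqVneq i c) => [->|hic].
  apply: (le_trans hc); rewrite ler_pM2l //.
  rewrite -(sum_memX _ us (hbag_uniq t0) (hbag_sub t0)).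
  apply: sum_sub_le => [x ->|x _]; by [rewrite eqxx|apply: hv].
have iP' : i \in rem c P by rewrite (mem_rem_uniq _ uP) inE hic iP.
apply: (le_trans (hg' i iP')); rewrite big_filter_cond le_eqVlt; apply/orP; left.
apply/eqP; congr (_ * _); apply: eq_bigl => x.
by case: (x \in B) => //=; rewrite eq_sym (negbTE hic).
Qed.

End BagFill.

Section Core.
Variable R : realFieldType.

Lemma part_total (v : nat -> R) s n mu : (forall x, 0 <= v x) -> haspart v s n mu ->
  n%:R * mu <= \sum_(x <- s) v x.
Proof.
move=> hv [f hf].
have h1 : \sum_(j < n) mu <= \sum_(j < n) \sum_(x <- s | f x == j) v x.
  by apply: ler_sum => j _; apply: hf.
rewrite sumr_const card_ord -mulr_natl in h1; apply: (le_trans h1).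
under eq_bigr do rewrite big_mkcond.
rewrite exchange_big /=; apply: ler_sum => x _.
case: (ltnP (f x) n) => h.
  rewrite (bigD1 (Ordinal h)) //= eqxx big1 ?addr0 // => j hj.
  case: eqP => // e; move: hj; have -> : j = Ordinal h by apply: val_inj => /=; rewrite e.
  by rewrite eqxx.
rewrite big1 // => j _; case: eqP => // e; move: (ltn_ord j); rewrite -e; lia.
Qed.

Lemma tauL x y : tau x y x = y. Proof. by rewrite /tau eqxx. Qed.
Lemma tauR x y : tau x y y = x.
Proof. by rewrite /tau; case: eqVneq => [->|]; rewrite ?eqxx. Qed.
Lemma tauO x y z : z != x -> z != y -> tau x y z = z.
Proof. by rewrite /tau => /negbTE -> /negbTE ->. Qed.

End Core.

Section CoreMain.
Variable R : realFieldType.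
Variable A : eqType.
Variable a0 : A.
Variable v : A -> nat -> R.
Variable mu : A -> R.
Hypothesis hv : forall i x, 0 <= v i x.

Lemma Core n : forall (P : seq A) (s : seq nat), size P = n -> uniq P -> uniq s ->
  (forall i, i \in P -> 0 <= mu i) ->
  (forall i, i \in P -> sorted (fun x y => v i y <= v i x) s) ->
  (forall i, i \in P -> haspart (v i) s n (mu i)) ->
  exists g : nat -> A, forall i, i \in P -> 2 * mu i <= 3 * \sum_(x <- s | g x == i) v i x.
Proof.
elim: n => [|k IH] P s hsz uP us hmu hsort hpart.
  by case: P hsz uP hmu hsort hpart => // _ *; exists (fun _ => a0).
have hmono : forall i p q, i \in P -> (p <= q < size s)%N -> v i (nth 0 s q) <= v i (nth 0 s p).
  move=> i p q iP /andP [hpq hq].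
  have htr : transitive (fun x y => v i y <= v i x).
    by move=> a b c h1 h2; apply: le_trans h2 h1.
  have h := sorted_leq_nth (leT := fun x y => v i y <= v i x) htr (fun a => lexx _) 0 (hsort i iP).
  apply: h; rewrite ?inE; lia.
case: (eqVneq s [::]) => [hs0|hsn].
  exists (fun _ => a0) => i iP; have [f hf] := hpart i iP.
  have := hf 0%N (ltn0Sn _); rewrite hs0 big_nil big_nil => h; have := hmu i iP; lra.
have hs0 : (0 < size s)%N by case: (s) hsn.
set x0 := nth 0 s 0.
have x0s : x0 \in s by apply: mem_nth.
have hrem : forall a i, i \in rem a P -> i \in P /\ i != a.
  by move=> a i; rewrite (mem_rem_uniq _ uP) => /andP [].
have hsort' : forall p i, i \in P -> sorted (fun x y => v i y <= v i x) [seq x <- s | p x].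
  move=> p i iP; apply: sorted_filter (hsort i iP).
  by move=> a b c h1 h2; apply: le_trans h2 h1.
case: (boolP (has (fun a => 2 * mu a <= 3 * v a x0) P)) => [/hasP [a aP ha]|nR1].
  set s' := [seq x <- s | x != x0].
  have [g' hg'] : exists g' : nat -> A, forall i, i \in rem a P ->
      2 * mu i <= 3 * \sum_(x <- s' | g' x == i) v i x.
    apply: (IH (rem a P) s').
    - by rewrite size_rem // hsz.
    - by rewrite rem_uniq.
    - by rewrite filter_uniq.
    - by move=> i /hrem [iP _]; apply: hmu.
    - by move=> i /hrem [iP _]; apply: hsort'.
    - move=> i /hrem [iP _].
      have [f [hfr hf]] := norm_part (hv i) (hpart i iP).
      apply: (drop_bundle (f := f) (j0 := f x0)).
      + by case: (hfr x0).
      + by move=> j hj _; apply: hf.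
      + by move=> x _; rewrite negbK => /eqP ->.
  exists (fun x => if x == x0 then a else g' x) => i iP.
  case: (eqVneq i a) => [->|hia].
    apply: (le_trans ha); rewrite ler_pM2l //.
    have -> : v a x0 = \sum_(x <- s | x \in [:: x0]) v a x.
      by rewrite (sum_memX _ us) // ?big_cons ?big_nil ?addr0 // => y; rewrite inE => /eqP ->.
    apply: sum_sub_le => [x|x _]; last by apply: hv.
    by rewrite inE => ->; rewrite eqxx.
  have iP' : i \in rem a P by rewrite (mem_rem_uniq _ uP) inE hia iP.
  apply: (le_trans (hg' i iP')); rewrite big_filter_cond le_eqVlt; apply/orP; left.
  apply/eqP; congr (_ * _); apply: eq_bigl => x.
  by case: (x == x0) => //=; rewrite eq_sym (negbTE hia).
have hneq : forall p q, (p < size s)%N -> (q < size s)%N -> p != q -> nth 0 s p != nth 0 s q.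
  by move=> p q hp hq hpq; rewrite nth_uniq.
have hmem : forall p, (p < size s)%N -> nth 0 s p \in s by move=> p hp; apply: mem_nth.
case: (boolP ((k.+1 < size s)%N && has (fun a => 2 * mu a <= 3 * (v a (nth 0 s k) + v a (nth 0 s k.+1))) P))
  => [/andP [hks /hasP [a aP ha]]|nR2].
  set xk := nth 0 s k; set xk1 := nth 0 s k.+1.
  set X := [:: xk; xk1].
  have hk : (k < size s)%N by lia.
  have dk : xk != xk1 by apply: hneq => //; lia.
  have uX : uniq X by rewrite /= inE dk.
  have sX : {subset X <= s} by move=> x; rewrite !inE => /orP [] /eqP ->; apply: hmem.
  set s' := [seq x <- s | x \notin X].
  have [g' hg'] : exists g' : nat -> A, forall i, i \in rem a P ->
      2 * mu i <= 3 * \sum_(x <- s' | g' x == i) v i x.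
    apply: (IH (rem a P) s').
    - by rewrite size_rem // hsz.
    - by rewrite rem_uniq.
    - by rewrite filter_uniq.
    - by move=> i /hrem [iP _]; apply: hmu.
    - by move=> i /hrem [iP _]; apply: hsort'.
    - move=> i /hrem [iP _].
      have [f [hfr hf]] := norm_part (hv i) (hpart i iP).
      have hfr' : forall x, (f x < k.+1)%N by move=> x; case: (hfr x).
      have [p [q [hpq hqk hfpq]]] := pigeon hfr' hks.
      set yp := nth 0 s p; set j0 := f yp.
      set y2 := if q == k then yp else nth 0 s q.
      set f1 := fun z => f (tau xk yp z).
      set f2 := fun z => f1 (tau xk1 y2 z).
      have hp : (p < size s)%N by lia.
      have hq : (q < size s)%N by lia.
      have f1y2 : f1 y2 = j0.
        rewrite /f1 /y2; case: (eqVneq q k) => [eqk|nqk].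
          by rewrite tauR /xk -eqk -hfpq.
        by rewrite tauO ?hfpq //; apply: hneq => //; lia.
      have vy2 : v i xk1 <= v i y2.
        rewrite /y2; case: (q == k); apply: hmono => //; lia.
      have y2xk : y2 != xk.
        rewrite /y2; case: (eqVneq q k) => [eqk|nqk]; apply: hneq => //; lia.
      have f2xk : f2 xk = j0.
        rewrite /f2 /= tauO; [by rewrite /f1 /= (tauL xk yp)|by []|by rewrite eq_sym].
      have f2xk1 : f2 xk1 = j0 by rewrite /f2 /= tauL.
      have ys : y2 \in s by rewrite /y2; case: (q == k); apply: hmem.
      have vkp : v i xk <= v i yp by apply: hmono => //; lia.
      apply: (drop_bundle (f := f2) (j0 := j0)).
      + exact: hfr'.
      + move=> j hj hjj0; apply: (le_trans (hf j hj)).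
        have h1 := swap_le (v := v i) (f := f) us (hmem _ hk) (hmem _ hp) (erefl j0) vkp hjj0.
        have h2 := swap_le (v := v i) (f := f1) us (hmem _ hks) ys f1y2 vy2 hjj0.
        exact: (le_trans h1 h2).
      + move=> x _; rewrite negbK !inE => /orP [] /eqP ->; by [].
  exists (fun x => if x \in X then a else g' x) => i iP.
  case: (eqVneq i a) => [->|hia].
    apply: (le_trans ha); rewrite ler_pM2l //.
    have -> : v a xk + v a xk1 = \sum_(x <- s | x \in X) v a x.
      by rewrite (sum_memX _ us) // !big_cons big_nil addr0.
    apply: sum_sub_le => [x|x _]; last by apply: hv.
    by move=> ->; rewrite eqxx.
  have iP' : i \in rem a P by rewrite (mem_rem_uniq _ uP) inE hia iP.
  apply: (le_trans (hg' i iP')); rewrite big_filter_cond le_eqVlt; apply/orP; left.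
  apply/eqP; congr (_ * _); apply: eq_bigl => x.
  by case: (x \in X) => //=; rewrite eq_sym (negbTE hia).
apply: (@BF R A a0 v mu hv (k.+1) P s (take k.+1 s)) => //.
- by apply: take_uniq.
- by move=> x /mem_take.
- by rewrite size_take_min geq_minl.
- by move=> i iP; apply: part_total (hv i) (hpart i iP).
- move=> i x iP xs.
  have hix : (index x s < size s)%N by rewrite index_mem.
  have := hmono i 0%N (index x s) iP; rewrite nth_index // => /(_ hix) h.
  move/hasPn: nR1 => /(_ i iP); rewrite -ltNge => h2; rewrite -/x0 in h; lra.
- move=> i x iP xs xt.
  have hix : (index x s < size s)%N by rewrite index_mem.
  have hki : (k.+1 <= index x s)%N.
    rewrite leqNgt; apply/negP => hlt; move/negP: xt; apply.
    rewrite -(nth_index 0 xs) -(nth_take 0 hlt); apply: mem_nth.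
    by rewrite size_take_min leq_min hlt hix.
  have hks : (k.+1 < size s)%N by lia.
  have := hmono i k.+1 (index x s) iP; rewrite nth_index // => /(_ _) h.
  have {}h := h ltac:(lia).
  have := hmono i k k.+1 iP ltac:(lia).
  move: nR2; rewrite hks /= => /hasPn /(_ i iP); rewrite -ltNge => h2 h3; lra.
Qed.

End CoreMain.

Section RoundRobin.
Variable R : realFieldType.

Lemma RR0 (N : nat) (hN : (0 < N)%N) (c : R) : c <= 0 -> forall K m (W : nat -> R), (m <= K)%N ->
  (forall d d', (d <= d')%N -> (d' < m)%N -> W d' <= W d) ->
  (forall d, (d < m)%N -> c <= W d) ->
  (forall d, (d < m)%N -> W d <= 0) ->
  \sum_(d <- iota 0 m) W d + N%:R * c <= N%:R * \sum_(d <- iota 0 m | (N %| d)%N) W d.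
Proof.
move=> hc; elim=> [|K IH] m W hmK hmono hlow hneg.
  by move: hmK; rewrite leqn0 => /eqP ->; rewrite !big_nil add0r mulr0 mulr_ge0_le0 // ler0n.
case: (leqP m N) => hmN.
  case: m hmK hmono hlow hneg hmN => [|m] hmK hmono hlow hneg hmN.
    by rewrite !big_nil add0r mulr0 mulr_ge0_le0 // ler0n.
  rewrite -[m.+1]add1n iotaD !big_cat /= !big_cons !big_nil dvdn0 /= !addr0.
  have -> : \sum_(d <- iota 1 m | (N %| d)%N) W d = 0.
    rewrite big_seq_cond big1 // => d /andP [hd hdv]; move: hd; rewrite mem_iota => /andP [h1 h2].
    have := dvdn_leq h1 hdv; lia.
  rewrite addr0.
  have h0 : \sum_(d <- iota 1 m) W d <= 0.
    rewrite big_seq; apply: sumr_le0 => d; rewrite mem_iota => /andP [h1 h2]; apply: hneg; lia.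
  have := hlow 0%N erefl; have := hneg 0%N erefl => hw0 hcw.
  have : N%:R * c <= N%:R * W 0%N by rewrite ler_pM2l ?ltr0n.
  lra.
have hm : m = (N + (m - N))%N by lia.
rewrite hm iotaD !big_cat /= add0n.
have -> : iota N (m - N) = map (addn N) (iota 0 (m - N)) by rewrite -iotaDl addn0.
rewrite !big_map.
have hb1 : \sum_(d <- iota 0 N | (N %| d)%N) W d = W 0%N.
  have -> : iota 0 N = 0%N :: iota 1 N.-1 by case: (N) hN.
  rewrite big_cons dvdn0 /=.
  rewrite big_seq_cond big1 ?addr0 // => d /andP [hd hdv]; move: hd; rewrite mem_iota => /andP [h1 h2].
  have := dvdn_leq h1 hdv; lia.
have hb2 : \sum_(d <- iota 0 N) W d <= N%:R * W 0%N.
  have := @sum_le_const R _ (iota 0 N) W (W 0%N); rewrite size_iota; apply.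
  by move=> d; rewrite mem_iota => /andP [_ h]; apply: hmono => //; lia.
have -> : \sum_(j <- iota 0 (m - N) | (N %| N + j)%N) W (N + j)%N = \sum_(j <- iota 0 (m - N) | (N %| j)%N) W (N + j)%N by apply: eq_bigl => j; rewrite dvdn_addr.
have := IH (m - N)%N (fun d => W (N + d)%N) ltac:(lia).
move=> /(_ _ _ _) H.
have {}H := H ltac:(move=> d d' h1 h2; apply: hmono; lia)
               ltac:(move=> d h; apply: hlow; lia) ltac:(move=> d h; apply: hneg; lia).
rewrite hb1 mulrDr; lra.
Qed.

Lemma RRagent (N : nat) (hN : (0 < N)%N) (i : nat) (hi : (i < N)%N) m (w : nat -> R) (c : R) :
  c <= 0 ->
  (forall t t', (t <= t')%N -> (t' < m)%N -> w t' <= w t) ->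
  (forall t, (t < m)%N -> c <= w t) ->
  (forall t, (t < m)%N -> w t <= 0) ->
  N%:R * c <= \sum_(t <- iota 0 m) w t ->
  2 * c <= \sum_(t <- iota 0 m | (t %% N == i)%N) w t.
Proof.
move=> hc hmono hlow hneg htot.
have hzero : forall n, (n <= i)%N -> \sum_(t <- iota 0 n | (t %% N == i)%N) w t = 0.
  move=> n hn; rewrite big_seq_cond big1 // => t /andP [ht hti]; move: ht hti.
  rewrite mem_iota => /andP [_ h]; rewrite modn_small; [by move/eqP; lia|lia].
case: (leqP m i) => hmi.
  rewrite hzero //; lra.
have hm : m = (i + (m - i))%N by lia.
move: htot; rewrite hm iotaD !big_cat /= hzero // add0r add0n.
have -> : iota i (m - i) = map (addn i) (iota 0 (m - i)) by rewrite -iotaDl addn0.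
rewrite !big_map.
have -> : \sum_(j <- iota 0 (m - i) | ((i + j) %% N == i)%N) w (i + j)%N
     = \sum_(j <- iota 0 (m - i) | (N %| j)%N) w (i + j)%N.
  apply: eq_bigl => j; rewrite -{2}(modn_small hi) -{2}(addn0 i) eqn_modDl mod0n.
  by [].
have h0 : \sum_(t <- iota 0 i) w t <= 0.
  rewrite big_seq; apply: sumr_le0 => t; rewrite mem_iota => /andP [_ h]; apply: hneg; lia.
have := RR0 hN hc (K := (m - i)%N) (m := (m - i)%N) (W := fun d => w (i + d)%N) (leqnn _).
move=> /(_ _ _ _) H.
have {}H := H ltac:(move=> d d' h1 h2; apply: hmono; lia)
               ltac:(move=> d h; apply: hlow; lia) ltac:(move=> d h; apply: hneg; lia).
move=> htot.
have : N%:R * (2 * c) <= N%:R * \sum_(j <- iota 0 (m - i) | (N %| j)%N) w (i + j)%N by lra.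
by rewrite ler_pM2l ?ltr0n.
Qed.

End RoundRobin.

Section Transfer.
Variable R : realFieldType.
Variable M : finType.
Variable x0 : M.
Variable N : nat.
Hypothesis hN : (0 < N)%N.

Definition sg (v : M -> R) := sort (fun x y => v y <= v x) (index_enum M).
Definition wv (v : M -> R) (t : nat) := v (nth x0 (sg v) t).
Definition mm := size (index_enum M).

Lemma sg_perm v : perm_eq (sg v) (index_enum M).
Proof. by rewrite /sg perm_sort. Qed.

Lemma size_sg v : size (sg v) = mm.
Proof. by rewrite /sg size_sort. Qed.

Lemma uniq_sg v : uniq (sg v).
Proof. by rewrite (perm_uniq (sg_perm v)) index_enum_uniq. Qed.

Lemma wv_mono v t t' : (t <= t')%N -> (t' < mm)%N -> wv v t' <= wv v t.
Proof.
move=> h1 h2; rewrite /wv.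
have htr : transitive (fun x y => v y <= v x) by move=> a b c e1 e2; apply: le_trans e2 e1.
have hs : sorted (fun x y => v y <= v x) (sg v).
  by apply: sort_sorted => a b; apply: le_total.
apply: (sorted_leq_nth htr (fun a => lexx _) x0 hs); rewrite ?inE ?size_sg //; lia.
Qed.

Lemma sum_sg v (P : pred M) :
  \sum_(t <- iota 0 mm | P (nth x0 (sg v) t)) wv v t = \sum_(x <- index_enum M | P x) v x.
Proof.
rewrite -(perm_big _ (sg_perm v)) (big_nth x0) size_sg /index_iota subn0.
by [].
Qed.

Lemma bundle_sg v (f : {ffun M -> 'I_N}) j :
  \sum_(t <- iota 0 mm | f (nth x0 (sg v) t) == j) wv v t = bundle_val v f j.
Proof. exact: (sum_sg v (fun x => f x == j)). Qed.

Lemma bundle_ge_vb (v : M -> R) (f : {ffun M -> 'I_N}) j : - vbound v <= bundle_val v f j.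
Proof.
rewrite /bundle_val /vbound lerNl.
have := @sum_sub_le R _ (index_enum M) predT (fun x => f x == j) (fun x => `|v x|) (fun _ _ => erefl) (fun x _ => normr_ge0 _).
apply: le_trans; rewrite -sumrN; apply: ler_sum => x _.
by rewrite -normrN ler_norm.
Qed.

Lemma bundle_le_vb (v : M -> R) (f : {ffun M -> 'I_N}) j : bundle_val v f j <= vbound v.
Proof.
rewrite /bundle_val /vbound.
have := @sum_sub_le R _ (index_enum M) predT (fun x => f x == j) (fun x => `|v x|) (fun _ _ => erefl) (fun x _ => normr_ge0 _).
apply: le_trans; apply: ler_sum => x _; exact: ler_norm.
Qed.

Lemma min_bundle_ge (v : M -> R) (f : {ffun M -> 'I_N}) : - vbound v <= min_bundle v f.
Proof.
rewrite /min_bundle; apply: le_bigmin => [|j _]; last by apply: bundle_ge_vb.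
have h : 0 <= vbound v by apply: sumr_ge0 => x _; exact: normr_ge0.
lra.
Qed.

Lemma MmS_attained (v : M -> R) : exists f : {ffun M -> 'I_N}, MmS N v = min_bundle v f.
Proof.
have [f _ hf] := @eq_bigmax _ _ _ (- vbound v) [ffun=> Ordinal hN] (fun _ => true) (min_bundle v) erefl (fun f _ => min_bundle_ge v f).
by exists f; rewrite /MmS hf.
Qed.

Lemma min_bundle_le (v : M -> R) (f : {ffun M -> 'I_N}) j : min_bundle v f <= bundle_val v f j.
Proof. exact: bigmin_le. Qed.

Lemma MmS_ge (v : M -> R) (f : {ffun M -> 'I_N}) : min_bundle v f <= MmS N v.
Proof. by apply: (le_bigmax_seq (- vbound v) f) => //; rewrite mem_index_enum. Qed.

Lemma haspart_MmS (v : M -> R) : haspart (wv v) (iota 0 mm) N (MmS N v).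
Proof.
have [f hf] := MmS_attained v.
exists (fun t => nat_of_ord (f (nth x0 (sg v) t))) => j hj.
rewrite hf; apply: (le_trans (min_bundle_le v f (Ordinal hj))).
by rewrite -bundle_sg.
Qed.

Lemma pick_aux (u : 'I_N -> M -> R) (g : nat -> 'I_N) r : forall (D : seq M), uniq D -> (size D + r <= mm)%N ->
  exists ps : seq M, [/\ size ps = r, uniq (D ++ ps) &
    forall t, (t < r)%N -> wv (u (g (size D + t)%N)) (size D + t) <= u (g (size D + t)%N) (nth x0 ps t)].
Proof.
elim: r => [|r IH] D uD hsz.
  by exists [::]; split; rewrite ?cats0.
set a := g (size D).
have [y0 hy0] : exists y, y \notin D.
  case: (boolP (has (fun y => y \notin D) (index_enum M))) => [/hasP [y _ hy]|hn]; first by exists y.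
  have hsub : {subset index_enum M <= D} by move=> y hy; move/hasPn: hn => /(_ y hy); rewrite negbK.
  have := uniq_leq_size (index_enum_uniq M) hsub; rewrite -/mm => h; exfalso.
  by have := leq_trans hsz h; rewrite addnS ltnNge leq_addr.
case: (@arg_maxP _ _ _ y0 (fun y => y \notin D) (u a) hy0) => x hx hmax.
have hclaim : wv (u a) (size D) <= u a x.
  set l := take (size D).+1 (sg (u a)).
  have hsl : size l = (size D).+1 by rewrite size_takel // size_sg; lia.
  have : has (fun y => y \notin D) l.
    apply/negPn/negP => hn.
    have hsub : {subset l <= D} by move=> y hy; move/hasPn: hn => /(_ y hy); rewrite negbK.
    by have := uniq_leq_size (take_uniq _ (uniq_sg (u a))) hsub; rewrite hsl ltnn.
  move=> /hasP [y hyl hyD].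
  have hj : (index y l < (size D).+1)%N by rewrite -hsl index_mem.
  have hy : y = nth x0 (sg (u a)) (index y l).
    by rewrite -(nth_take x0 hj) (nth_index x0 hyl).
  apply: (le_trans _ (hmax y hyD)); rewrite hy.
  have := wv_mono (u a) (t := index y l) (t' := size D) ltac:(lia) ltac:(lia).
  by rewrite /wv.
have uD' : uniq (D ++ [:: x]) by rewrite cat_uniq uD /= andbT orbF; apply/negP => /(negP hx).
have [ps [hps1 hps2 hps3]] := IH (D ++ [:: x]) uD' ltac:(rewrite size_cat /=; lia).
exists (x :: ps); split.
- by rewrite /= hps1.
- by rewrite -cat1s catA.
- case=> [|t] ht; first by rewrite addn0.
  have := hps3 t ltac:(lia); rewrite size_cat /= addnS -addn1 -addnA add1n.
  by rewrite addn0.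
Qed.

Lemma pick (u : 'I_N -> M -> R) (g : nat -> 'I_N) : exists F : {ffun M -> 'I_N}, forall i,
  \sum_(t <- iota 0 mm | g t == i) wv (u i) t <= bundle_val (u i) F i.
Proof.
have [ps [hps1 hps2 hps3]] := @pick_aux u g mm [::] erefl (leqnn _).
have ups : uniq ps by [].
have hperm : perm_eq ps (index_enum M).
  apply: uniq_perm => //; first by apply: index_enum_uniq.
  by have [] := uniq_min_size ups (fun y _ => mem_index_enum y) ltac:(rewrite hps1 leqnn).
exists [ffun x => g (index x ps)] => i.
rewrite /bundle_val -(perm_big _ hperm) (big_nth x0) hps1 /index_iota subn0.
have -> : \sum_(t <- iota 0 mm | [ffun x => g (index x ps)] (nth x0 ps t) == i) u i (nth x0 ps t)
   = \sum_(t <- iota 0 mm | g t == i) u i (nth x0 ps t).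
  rewrite big_seq_cond [RHS]big_seq_cond; apply: eq_bigl => t.
  case ht: (t \in iota 0 mm) => //=; rewrite ffunE index_uniq // hps1.
  by move: ht; rewrite mem_iota add0n => /andP [].
rewrite big_seq_cond [X in _ <= X]big_seq_cond; apply: ler_sum => t /andP [ht /eqP hg].
move: ht; rewrite mem_iota add0n => /andP [_ ht].
by have := hps3 t ht; rewrite /= add0n hg.
Qed.

End Transfer.

Lemma sorted_iota_rel (r : rel nat) a n :
  (forall t, (a <= t)%N -> (t.+1 < a + n)%N -> r t t.+1) -> sorted r (iota a n).
Proof.
elim: n a => [|n IH] a h //=.
case: n IH h => [|n] IH h //=.
rewrite h ?leqnn //; last by lia.
have := IH a.+1 ltac:(move=> t h1 h2; apply: h; lia).
by [].
Qed.


Section Exist.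
Variable R : realFieldType.
Variable M : finType.
Variable N : nat.
Hypothesis hN : (0 < N)%N.

Lemma min_bundle_nonneg (v : M -> R) (f : {ffun M -> 'I_N}) :
  (forall x, 0 <= v x) -> 0 <= min_bundle v f.
Proof.
move=> hv; rewrite /min_bundle; apply: le_bigmin => [|j _].
  by apply: sumr_ge0 => x _; exact: normr_ge0.
by apply: sumr_ge0.
Qed.

Lemma MmS_nonneg (v : M -> R) : (forall x, 0 <= v x) -> 0 <= MmS N v.
Proof.
move=> hv; apply: (le_trans (min_bundle_nonneg [ffun=> Ordinal hN] hv)); exact: MmS_ge.
Qed.

Lemma MmS_nonpos (v : M -> R) : (forall x, v x <= 0) -> MmS N v <= 0.
Proof.
move=> hv; have [f ->] := MmS_attained hN v.
apply: (le_trans (min_bundle_le v f (Ordinal hN))).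
by apply: sumr_le0.
Qed.

Lemma MmS_item (v : M -> R) : (forall x, v x <= 0) -> forall x, MmS N v <= v x.
Proof.
move=> hv x; have [f ->] := MmS_attained hN v.
apply: (le_trans (min_bundle_le v f (f x))).
rewrite /bundle_val (bigD1 x) //=; rewrite -[X in _ <= X]addr0 lerD2l.
by apply: sumr_le0.
Qed.

Lemma MmS_total (v : M -> R) : N%:R * MmS N v <= \sum_(x <- index_enum M) v x.
Proof.
have [f ->] := MmS_attained hN v.
rewrite (partition_big f (fun _ => true)) //=.
have := @ler_sum R _ (index_enum 'I_N) (fun _ => true) (fun _ => min_bundle v f) (fun j => bundle_val v f j).
move=> /(_ (fun j _ => min_bundle_le v f j)).
by rewrite sumr_const card_ord mulr_natl.
Qed.

Lemma exists23 (u : 'I_N -> M -> R) : (forall i x, 0 <= u i x) ->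
  exists F : {ffun M -> 'I_N}, forall i, 2 * MmS N (u i) <= 3 * bundle_val (u i) F i.
Proof.
move=> hu.
case: (pickP (@predT M)) => [x0 _|hM]; last first.
  exists [ffun=> Ordinal hN] => i.
  have -> : bundle_val (u i) [ffun=> Ordinal hN] i = 0 by rewrite /bundle_val big1 // => x; have := hM x.
  have [f hf] := MmS_attained hN (u i).
  have : MmS N (u i) <= 0.
    rewrite hf; apply: (le_trans (min_bundle_le (u i) f (Ordinal hN))).
    by rewrite /bundle_val big1 // => x; have := hM x.
  lra.
have hsort : forall i, sorted (fun x y => wv x0 (u i) y <= wv x0 (u i) x) (iota 0 (mm M)).
  by move=> i; apply: sorted_iota_rel => t _ h2; apply: (wv_mono x0 hN).
have [g hg] := @Core R _ (Ordinal hN) (fun i t => wv x0 (u i) t) (fun i => MmS N (u i))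
   (fun i t => hu _ _) N (enum 'I_N) (iota 0 (mm M)) (size_enum_ord N) (enum_uniq _) (iota_uniq _ _)
   (fun i _ => MmS_nonneg (hu i))
   (fun i _ => hsort i)
   (fun i _ => haspart_MmS x0 hN (u i)).
have [F hF] := pick x0 hN u g.
exists F => i; apply: (le_trans (hg i (mem_enum _ i))).
by rewrite ler_pM2l //; apply: hF.
Qed.

Lemma existsch (d : 'I_N -> M -> R) : (forall i x, d i x <= 0) ->
  exists F : {ffun M -> 'I_N}, forall i, 2 * MmS N (d i) <= bundle_val (d i) F i.
Proof.
move=> hd.
case: (pickP (@predT M)) => [x0 _|hM]; last first.
  exists [ffun=> Ordinal hN] => i.
  have -> : bundle_val (d i) [ffun=> Ordinal hN] i = 0 by rewrite /bundle_val big1 // => x; have := hM x.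
  have := MmS_nonpos (hd i); lra.
set g := fun t => Ordinal (ltn_pmod t hN).
have [F hF] := pick x0 hN d g.
exists F => i; apply: le_trans (hF i).
have -> : \sum_(t <- iota 0 (mm M) | g t == i) wv x0 (d i) t
    = \sum_(t <- iota 0 (mm M) | (t %% N == i)%N) wv x0 (d i) t.
  by apply: eq_bigl => t.
apply: (RRagent hN (ltn_ord i)).
- exact: MmS_nonpos.
- by move=> t t' h1 h2; apply: (wv_mono x0 hN).
- by move=> t _; rewrite /wv; apply: MmS_item.
- by move=> t _; rewrite /wv.
- by rewrite (sum_sg x0 (d i) predT); apply: MmS_total.
Qed.

End Exist.

Theorem lemma4 (R : realFieldType) (M : finType) (N : nat) (hN : (0 < N)%N) :
  (forall u : 'I_N -> M -> R, nonneg_instance u ->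
     exists l : option R,
       [/\ opt_ratio_nonneg u l,
           (match l with None => True | Some l => 2 / 3 <= l end) &
           (l = None <-> forall i : 'I_N, MmS N (u i) = 0)])
  /\
  (forall d : 'I_N -> M -> R, nonpos_instance d ->
     exists l : R,
       [/\ opt_ratio_nonpos d l, 0 <= l, l <= 2 &
           ((exists i : 'I_N, MmS N (d i) = 0) -> l = 0)]).
Proof.
split.
- move=> u hu.
  have hmu0 : forall i, 0 <= MmS N (u i) by move=> i; apply: MmS_nonneg => // x; apply: hu.
  have hval0 : forall f i, 0 <= bundle_val (u i) f i by move=> f i; apply: sumr_ge0 => x _; apply: hu.
  case: (boolP [forall i, MmS N (u i) == 0]) => [/forallP hall|].
    exists None; split => //=.
      move=> lam; exists [ffun=> Ordinal hN] => i.
      by rewrite (eqP (hall i)) mulr0.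
    by split => // _ i; apply/eqP.
  rewrite negb_forall => /existsP [i0 hi0].
  have hi0p : 0 < MmS N (u i0) by rewrite lt_def hi0 hmu0.
  set r := fun f : {ffun M -> 'I_N} =>
    \big[Num.min/ bundle_val (u i0) f i0 / MmS N (u i0)]_(i | MmS N (u i) != 0)
       (bundle_val (u i) f i / MmS N (u i)).
  have hkey : forall lam f, solves u lam f <-> lam <= r f.
    move=> lam f; split.
      move=> hs; apply: le_bigmin => [|i hi].
        by rewrite ler_pdivlMr //; apply: hs.
      have hp : 0 < MmS N (u i) by rewrite lt_def hi hmu0.
      by rewrite ler_pdivlMr //; apply: hs.
    move=> hl i; case: (eqVneq (MmS N (u i)) 0) => [->|hi].
      by rewrite mulr0.
    have hp : 0 < MmS N (u i) by rewrite lt_def hi hmu0.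
    rewrite -ler_pdivlMr //; apply: (le_trans hl).
    by apply: (bigmin_le_cond _ (j := i)).
  have [F23 hF23] := exists23 hN hu.
  have h23 : 2 / 3 <= r F23.
    apply/hkey => i; have := hF23 i; lra.
  case: (@arg_maxP _ _ _ F23 (fun _ => true) r erefl) => fm _ hmax.
  exists (Some (r fm)); split => //=.
  + split.
    * by apply: (le_trans _ (hmax F23 erefl)); apply: le_trans h23; lra.
    * by exists fm; apply/hkey.
    * by move=> lam _ [f /hkey hf]; apply: le_trans hf (hmax f erefl).
  + exact: le_trans h23 (hmax F23 erefl).
  + split => // hall; exfalso; move/eqP: hi0; apply; exact: hall.
- move=> d hd.
  have hmu0 : forall i, MmS N (d i) <= 0 by move=> i; apply: (MmS_nonpos hN) => x; apply: hd.
  set feas := fun f : {ffun M -> 'I_N} => [forall i, (MmS N (d i) == 0) ==> (0 <= bundle_val (d i) f i)].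
  set sc := fun f : {ffun M -> 'I_N} =>
    \big[Num.max/0]_(i | MmS N (d i) != 0) (bundle_val (d i) f i / MmS N (d i)).
  have hkey : forall lam f, 0 <= lam -> (solves d lam f <-> feas f /\ sc f <= lam).
    move=> lam f hlam; split.
      move=> hs; split.
        apply/forallP => i; apply/implyP => /eqP h0; have := hs i; by rewrite h0 mulr0.
      apply: bigmax_le => // i hi.
      have hn : MmS N (d i) < 0 by rewrite lt_def eq_sym hi hmu0.
      by rewrite ler_ndivrMr //; apply: hs.
    move=> [hf hs] i; case: (eqVneq (MmS N (d i)) 0) => [h0|hi].
      by rewrite h0 mulr0; move/forallP: hf => /(_ i); rewrite h0 eqxx.
    have hn : MmS N (d i) < 0 by rewrite lt_def eq_sym hi hmu0.
    rewrite -ler_ndivrMr //; apply: le_trans hs.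
    by apply: (le_bigmax_cond _ (j := i)).
  have sc0 : forall f, 0 <= sc f by move=> f; apply: bigmax_ge_id.
  have [F2 hF2] := existsch hN hd.
  have [hfe2 hs2] : feas F2 /\ sc F2 <= 2 by apply/hkey => //; lra.
  case: (@arg_minP _ _ _ F2 feas sc hfe2) => fm hfm hmin.
  have hminl : forall lam, 0 <= lam -> solvable d lam -> sc fm <= lam.
    move=> lam hlam [f /(hkey _ _ hlam) [hf hs]]; exact: le_trans (hmin f hf) hs.
  exists (sc fm); split.
  + split => //; exists fm; apply/hkey => //.
  + exact: sc0.
  + exact: le_trans (hmin F2 hfe2) hs2.
  + move=> [i hi]; apply/eqP; rewrite eq_le sc0 andbT; apply: hminl => //.
    exists [ffun=> i] => j; rewrite mul0r.
    case: (eqVneq j i) => [->|hji].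
      rewrite /bundle_val big1 // => x _.
      have := hd i x; have := MmS_item hN (hd i) x; rewrite hi; lra.
    rewrite /bundle_val big1 // => x; rewrite ffunE eq_sym (negbTE hji) //.
Qed.
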